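(* Let $G = K_{m_1} \otimes \cdots \otimes K_{m_t}$ with $m_i \geq 3$ for all $i$. Then $\dim(G) \geq \max\{m_i - 1 : i = 1,\dots,t\}$.
   Context: $K_r$ is the complete graph on $r$ vertices. The tensor product of graphs has vertex set the Cartesian product of vertex sets, with $(a_1,\dots,a_t)$ adjacent to $(b_1,\dots,b_t)$ iff $a_ib_i$ is an edge of the $i$-th factor for every $i$. For a connected graph and an ordered set $W=\{w_1,\dots,w_k\}$ of vertices, $r(v\mid W)=(d(v,w_1),\dots,d(v,w_k))$; $W$ is resolving if distinct vertices have distinct representations; $\dim(G)$ is the minimum size of a resolving set. *)

(* Defs.v *)
From mathcomp Require Import all_boot.
Set Implicit Arguments. Unset Strict Implicit. Unset Printing Implicit Defensive.

Fixpoint ball_set (T : finType) (e : rel T) (x : T) (k : nat) : {set T} :=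
  match k with
  | 0 => [set x]
  | k'.+1 => let B := ball_set e x k' in B :|: [set z | [exists w in B, e w z]]
  end.

(* Graph distance: least k such that y is within k steps of x
   (returns #|T| if y is unreachable, which never happens in a connected graph). *)
Definition gdist (T : finType) (e : rel T) (x y : T) : nat :=
  find (fun k => y \in ball_set e x k) (iota 0 #|T|).

Definition resolving (T : finType) (e : rel T) (W : {set T}) : bool :=
  [forall u : T, forall v : T,
     [forall w in W, gdist e u w == gdist e v w] ==> (u == v)].

Definition metric_dim (T : finType) (e : rel T) : nat :=
  #|[arg min_(W < [set: T] | resolving e W) #|W|]|.

(* Tensor product K_{m_0} x ... x K_{m_(t-1)}: vertices are tuples
   (a_i)_{i<t} with a_i in 'I_(m i); a ~ b iff a_i != b_i for every i
   (a_i b_i is an edge of the complete graph K_{m i}). *)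
Definition tensorK_vertex (t : nat) (m : 'I_t -> nat) : finType :=
  {dffun forall i : 'I_t, 'I_(m i)}.

Definition tensorK_adj (t : nat) (m : 'I_t -> nat) : rel (tensorK_vertex m) :=
  fun a b => [forall i : 'I_t, a i != b i].
Arguments tensorK_adj t m : clear implicits.
Arguments tensorK_vertex t m : clear implicits.

(* Main.v *)
Require Import Defs.
From mathcomp Require Import all_boot zify.
Set Implicit Arguments. Unset Strict Implicit. Unset Printing Implicit Defensive.

Lemma setT_resolving (T : finType) (e : rel T) : resolving e [set: T].
Proof.
apply/forallP => u; apply/forallP => v; apply/implyP => /forall_inP H.
have := H u (in_setT u); rewrite /gdist.
have : 0 < #|T| by apply/card_gt0P; exists u.
case: #|T| => // n _ /=.
rewrite !inE eqxx /=.
by case: ifP => // /eqP ->.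
Qed.

Lemma ball_mono (T : finType) (e : rel T) x k z :
  z \in ball_set e x k -> z \in ball_set e x k.+1.
Proof. by move=> H /=; rewrite inE H. Qed.

Lemma ball_ge (T : finType) (e : rel T) x k n z :
  z \in ball_set e x k -> z \in ball_set e x (k + n).
Proof.
move=> H; elim: n => [|n IH]; first by rewrite addn0.
by rewrite addnS; apply: ball_mono.
Qed.

Lemma ball1 (T : finType) (e : rel T) x z :
  (z \in ball_set e x 1) = (z == x) || e x z.
Proof.
rewrite /= !inE; congr (_ || _).
apply/existsP/idP => [[w /andP [] ]|H]; first by rewrite inE => /eqP ->.
by exists x; rewrite inE eqxx.
Qed.

Section T.
Variables (t : nat) (m : 'I_t -> nat).
Hypothesis Hm : forall i, 3 <= m i.
Let T := tensorK_vertex t m.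
Let e := tensorK_adj t m.

Lemma common_nb (u w : T) : exists z : T, e u z && e z w.
Proof.
have ex : forall i, exists y : 'I_(m i), (y != u i) && (y != w i).
  move=> i.
  have : 0 < #|~: [set u i; w i]|.
    have := cardsC [set u i; w i]. rewrite card_ord.
    have := cards2 (u i) (w i). have := Hm i.
    case: (u i == w i) => /= h ->; lia.
  case/card_gt0P => y. rewrite !inE negb_or => Hy. by exists y.
exists (finfun (fun i => xchoose (ex i))).
apply/andP; split; apply/forallP => i; rewrite ffunE;
  have /andP [h1 h2] := xchooseP (ex i) => //.
by rewrite eq_sym.
Qed.

Lemma ball2 (u w : T) : w \in ball_set e u 2.
Proof.
have [z /andP [h1 h2]] := common_nb u w.
rewrite /= inE; apply/orP; right; rewrite inE; apply/existsP; exists z.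
by rewrite -/(ball_set e u 1) ball1 h1 orbT h2.
Qed.

End T.

Theorem corollary2p3 (t : nat) (m : 'I_t -> nat) :
  (forall i : 'I_t, 3 <= m i) ->
  \max_(i < t) (m i).-1 <= metric_dim (tensorK_adj t m).
Proof.
move=> Hm; apply/bigmax_leqP => j _.
rewrite /metric_dim.
case: (arg_minnP (fun W : {set tensorK_vertex t m} => #|W|) (setT_resolving (tensorK_adj t m))).
move=> W HW _.
rewrite leqNgt; apply/negP => Hlt.
set S := [set (w : tensorK_vertex t m) j | w in W].
have : 1 < #|~: S|.
  rewrite cardsCs setCK card_ord.
  have := leq_imset_card (fun w : tensorK_vertex t m => w j) W.
  rewrite -/S. move: Hlt. have := Hm j. lia.
case/card_gt1P => a [b [Ha Hb Hab]].
have d : forall i, 'I_(m i) := fun i => Ordinal (leq_trans (isT : 0 < 3) (Hm i)).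
pose u : tensorK_vertex t m := finfun (fun i => insubd (d i) (if i == j then val a else 0)).
pose v : tensorK_vertex t m := finfun (fun i => insubd (d i) (if i == j then val b else 0)).
have uj : u j = a by apply: val_inj; rewrite ffunE eqxx insubdK //; apply: ltn_ord.
have vj : v j = b by apply: val_inj; rewrite ffunE eqxx insubdK //; apply: ltn_ord.
have uv : forall i, i != j -> u i = v i.
  by move=> i /negbTE h; rewrite !ffunE h.
have : u == v.
  move/forallP: HW => /(_ u) /forallP /(_ v) /implyP; apply.
  apply/forall_inP => w wW.
  have wja : w j != a by apply/eqP => E; move: Ha; rewrite in_setC -E (imset_f (fun w : tensorK_vertex t m => w j) wW).
  have wjb : w j != b by apply/eqP => E; move: Hb; rewrite in_setC -E (imset_f (fun w : tensorK_vertex t m => w j) wW).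
  rewrite /gdist; apply/eqP; apply: eq_find => k.
  case: k => [|[|k]].
  - rewrite /= !inE; apply/idP/idP => /eqP E.
    + by move: wja; rewrite E uj eqxx.
    + by move: wjb; rewrite E vj eqxx.
  - rewrite !ball1.
    have -> : (w == u) = false by apply/eqP => E; move: wja; rewrite E uj eqxx.
    have -> : (w == v) = false by apply/eqP => E; move: wjb; rewrite E vj eqxx.
    rewrite /= /tensorK_adj; apply/forallP/forallP => H i; have := H i;
      case: (eqVneq i j) => [->|/uv ->] // _; by rewrite ?uj ?vj eq_sym.
  - rewrite -(addn2 k) addnC.
    by rewrite !(ball_ge _ (ball2 Hm _ _)).
move/eqP => E; move: Hab; by rewrite -uj -vj E eqxx.
Qed.
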